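(* Let $P^0,P^1\in\Delta^{n-1}_+$ with $P^0\succ_{P^*}P^1$. Then $P^1\in P^0+\mathbf{Q}(P^0,P^* )$.
   Context: Fix $n\ge 2$ and a positive equilibrium distribution $P^*=(p^*_i)$, $p^*_i>0$, $\sum_i p^*_i=1$. Let $\Delta^{n-1}_+=\{P\in\mathbb{R}^n: p_i>0,\ \sum_i p_i=1\}$. A Markov chain with equilibrium $P^*$ is given by rate constants $q_{ij}\ge 0$ ($i\neq j$) satisfying $\sum_{j\ne i}q_{ij}p^*_j=\bigl(\sum_{j\ne i}q_{ji}\bigr)p^*_i$ for all $i$, with Kolmogorov equation $\frac{dp_i}{dt}=\sum_{j\ne i}(q_{ij}p_j-q_{ji}p_i)$. $P^0\succ^0_{P^*}P^1$ if for some such chain the solution with $P(0)=P^0$ has $P(1)=P^1$; the Markov order $\succ_{P^*}$ is the closed transitive closure of $\succ^0_{P^*}$. For $i\neq j$ let $\gamma^{ji}$ be the vector with $\gamma^{ji}_j=-1$, $\gamma^{ji}_i=1$, other coordinates $0$; ${\rm cone}$ denotes non-negative linear combinations; ${\rm sign}$ is the three-valued sign function; $\mathbf{Q}(P,P^* )={\rm cone}\{\gamma^{ji}\,{\rm sign}(\tfrac{p_j}{p^*_j}-\tfrac{p_i}{p^*_i}) : 1\le j<i\le n\}$. *)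

(* Defs.v *)
From Stdlib Require Import Reals Lra.
Open Scope R_scope.

(* Vectors in R^n are functions nat -> R; only indices 0..n-1 matter. *)
Definition vec := nat -> R.

Fixpoint fsum (n : nat) (f : nat -> R) : R :=
  match n with
  | O => 0
  | S m => fsum m f + f m
  end.

Definition pos_simplex (n : nat) (P : vec) : Prop :=
  (forall i, (i < n)%nat -> 0 < P i) /\ fsum n P = 1.

Definition markov_rates (n : nat) (Pstar : vec) (q : nat -> nat -> R) : Prop :=
  (forall i j, (i < n)%nat -> (j < n)%nat -> i <> j -> 0 <= q i j) /\
  (forall i, (i < n)%nat ->
     fsum n (fun j => if Nat.eqb j i then 0 else q i j * Pstar j)
     = fsum n (fun j => if Nat.eqb j i then 0 else q j i) * Pstar i).

Definition kolmogorov_rhs (n : nat) (q : nat -> nat -> R) (p : vec) (i : nat) : R :=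
  fsum n (fun j => if Nat.eqb j i then 0 else q i j * p j - q j i * p i).

Definition kolmogorov_solution (n : nat) (q : nat -> nat -> R) (P : R -> vec) : Prop :=
  forall i, (i < n)%nat ->
    forall t, derivable_pt_lim (fun s => P s i) t (kolmogorov_rhs n q (P t) i).

Definition vec_eq (n : nat) (P Q : vec) : Prop := forall i, (i < n)%nat -> P i = Q i.

Definition markov_step (n : nat) (Pstar P0 P1 : vec) : Prop :=
  pos_simplex n P0 /\
  exists q : nat -> nat -> R, exists P : R -> vec,
    markov_rates n Pstar q /\ kolmogorov_solution n q P /\
    vec_eq n (P 0) P0 /\ vec_eq n (P 1) P1.

Definition transitive_on (Rel : vec -> vec -> Prop) : Prop :=
  forall a b c, Rel a b -> Rel b c -> Rel a c.

Definition closed_rel (n : nat) (Rel : vec -> vec -> Prop) : Prop :=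
  forall (A B : nat -> vec) (a b : vec),
    (forall k, Rel (A k) (B k)) ->
    (forall i, (i < n)%nat -> Un_cv (fun k => A k i) (a i)) ->
    (forall i, (i < n)%nat -> Un_cv (fun k => B k i) (b i)) ->
    pos_simplex n a -> pos_simplex n b ->
    Rel a b.

(* Markov order: the smallest closed transitive relation containing markov_step *)
Definition markov_order (n : nat) (Pstar P0 P1 : vec) : Prop :=
  forall Rel : vec -> vec -> Prop,
    (forall a b, markov_step n Pstar a b -> Rel a b) ->
    transitive_on Rel -> closed_rel n Rel ->
    Rel P0 P1.

Definition sgn (x : R) : R :=
  if Rlt_dec x 0 then -1 else if Req_EM_T x 0 then 0 else 1.

Definition gamma_vec (j i : nat) : vec :=
  fun k => (if Nat.eqb k i then 1 else 0) - (if Nat.eqb k j then 1 else 0).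

Definition in_Q (n : nat) (P Pstar v : vec) : Prop :=
  exists c : nat -> nat -> R,
    (forall j i, 0 <= c j i) /\
    forall k, (k < n)%nat ->
      v k = fsum n (fun i => fsum i (fun j =>
              c j i * sgn (P j / Pstar j - P i / Pstar i) * gamma_vec j i k)).

(* Main.v *)
Require Import Defs.
From Stdlib Require Import Reals Lra Lia Classical Bool.
Open Scope R_scope.

Lemma fsum_ext n f g : (forall i, (i < n)%nat -> f i = g i) -> fsum n f = fsum n g.
Proof. induction n; simpl; intros H; auto. rewrite IHn by (intros; apply H; lia). rewrite (H n) by lia; auto. Qed.

Lemma fsum_plus n f g : fsum n (fun i => f i + g i) = fsum n f + fsum n g.
Proof. induction n; simpl; [lra|]. rewrite IHn; lra. Qed.

Lemma fsum_minus n f g : fsum n (fun i => f i - g i) = fsum n f - fsum n g.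
Proof. induction n; simpl; [lra|]. rewrite IHn; lra. Qed.

Lemma fsum_scal n c f : fsum n (fun i => c * f i) = c * fsum n f.
Proof. induction n; simpl; [lra|]. rewrite IHn; lra. Qed.

Lemma fsum_scalr n c f : fsum n (fun i => f i * c) = fsum n f * c.
Proof. induction n; simpl; [lra|]. rewrite IHn; lra. Qed.

Lemma fsum_le n f g : (forall i, (i < n)%nat -> f i <= g i) -> fsum n f <= fsum n g.
Proof. induction n; simpl; intros H; [lra|]. pose proof (H n ltac:(lia)).
 pose proof (IHn ltac:(intros; apply H; lia)). lra. Qed.

Lemma fsum_zero n f : (forall i, (i < n)%nat -> f i = 0) -> fsum n f = 0.
Proof. intros H; rewrite (fsum_ext n f (fun _ => 0)) by auto. induction n; simpl; [lra|]. rewrite IHn by (intros; apply H; lia). lra. Qed.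

Lemma fsum_single n m f : (m < n)%nat -> (forall i, (i < n)%nat -> i <> m -> f i = 0) -> fsum n f = f m.
Proof. induction n; intros Hm H; [lia|]. simpl. destruct (Nat.eq_dec m n).
 - subst. rewrite fsum_zero. lra. intros; apply H; lia.
 - rewrite IHn by (try lia; intros; apply H; lia). rewrite (H n) by lia. lra. Qed.

Lemma fsum_ind n m : (m < n)%nat -> fsum n (fun k => if Nat.eqb k m then 1 else 0) = 1.
Proof. intros Hm. rewrite (fsum_single n m) by (try lia; intros i _ Hi; apply Nat.eqb_neq in Hi; rewrite Hi; auto).
 rewrite Nat.eqb_refl; auto. Qed.

Lemma fsum_neg_ex n f : fsum n f < 0 -> exists k, (k < n)%nat /\ f k < 0.
Proof. induction n; simpl; intros H; [lra|]. destruct (Rlt_dec (f n) 0).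
 - exists n; split; auto; lia.
 - destruct IHn as [k [Hk Hf]]; [lra|]. exists k; split; auto; lia. Qed.

Lemma fsum_nonpos_zero n f : (forall k, (k < n)%nat -> f k <= 0) -> fsum n f = 0 -> forall k, (k < n)%nat -> f k = 0.
Proof. intros H Hs k Hk. destruct (Req_dec (f k) 0); auto. exfalso.
 assert (f k < 0) by (pose proof (H k Hk); lra).
 assert (fsum n f <= fsum n (fun i => if Nat.eq_dec i k then f k else 0)).
 { apply fsum_le. intros i Hi. destruct (Nat.eq_dec i k); subst; [lra| apply H; auto]. }
 assert (fsum n (fun i => if Nat.eq_dec i k then f k else 0) = f k).
 { rewrite (fsum_single n k); auto. destruct (Nat.eq_dec k k); tauto. intros i _ Hi; destruct (Nat.eq_dec i k); tauto. }
 lra. Qed.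

Lemma fsum_ge_term n g m : (forall k, (k < n)%nat -> 0 <= g k) -> (m < n)%nat -> g m <= fsum n g.
Proof. intros H Hm.
 assert (fsum n (fun i => if Nat.eq_dec i m then g m else 0) = g m).
 { rewrite (fsum_single n m); auto. destruct (Nat.eq_dec m m); tauto. intros i _ Hi; destruct (Nat.eq_dec i m); tauto. }
 assert (fsum n (fun i => if Nat.eq_dec i m then g m else 0) <= fsum n g).
 { apply fsum_le. intros i Hi. destruct (Nat.eq_dec i m); subst; [lra|apply H; auto]. }
 lra. Qed.

Lemma fsum_swap n f : fsum n (fun i => fsum n (fun j => f i j)) = fsum n (fun j => fsum n (fun i => f i j)).
Proof. induction n; simpl; [lra|]. rewrite !fsum_plus. rewrite IHn. change (fsum n (f n)) with (fsum n (fun j => f n j)). lra. Qed.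

Definition rr (a Pstar : vec) k := a k / Pstar k.

Fixpoint nz (n : nat) (v : vec) : nat :=
  match n with O => O | S m => (nz m v + (if Req_EM_T (v m) 0 then 0 else 1))%nat end.

Lemma nz_le n v w : (forall k, (k < n)%nat -> v k = 0 -> w k = 0) -> (nz n w <= nz n v)%nat.
Proof. induction n; simpl; intros H; [lia|].
 pose proof (IHn ltac:(intros; apply H; auto; lia)).
 destruct (Req_EM_T (v n) 0); destruct (Req_EM_T (w n) 0); try lia.
 exfalso; apply n0; apply H; auto. Qed.

Lemma nz_lt n v w : (forall k, (k < n)%nat -> v k = 0 -> w k = 0) ->
  (exists k, (k < n)%nat /\ v k <> 0 /\ w k = 0) -> (nz n w < nz n v)%nat.
Proof. induction n; simpl; intros H [k [Hk [Hv Hw]]]; [lia|].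
 destruct (Nat.eq_dec k n).
 - subst. pose proof (nz_le n v w ltac:(intros; apply H; auto; lia)).
   destruct (Req_EM_T (v n) 0); [tauto|]. destruct (Req_EM_T (w n) 0); [lia|tauto].
 - pose proof (IHn ltac:(intros; apply H; auto; lia) ltac:(exists k; repeat split; auto; lia)).
   destruct (Req_EM_T (v n) 0); destruct (Req_EM_T (w n) 0); try lia.
   exfalso; apply n1; apply H; auto. Qed.

Lemma sgn_pos x : 0 < x -> sgn x = 1.
Proof. intros. unfold sgn. destruct (Rlt_dec x 0); [lra|]. destruct (Req_EM_T x 0); lra. Qed.
Lemma sgn_neg x : x < 0 -> sgn x = -1.
Proof. intros. unfold sgn. destruct (Rlt_dec x 0); lra. Qed.

Lemma inQ_ext n a Pstar v w : (forall k, (k < n)%nat -> v k = w k) -> in_Q n a Pstar w -> in_Q n a Pstar v.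
Proof. intros H [c [Hc Hw]]. exists c; split; auto. intros k Hk. rewrite H; auto. Qed.

Lemma inQ_zero n a Pstar v : (forall k, (k < n)%nat -> v k = 0) -> in_Q n a Pstar v.
Proof. intros H. exists (fun _ _ => 0). split; [intros; lra|]. intros k Hk. rewrite H by auto.
 symmetry; apply fsum_zero. intros i _. apply fsum_zero. intros j _. lra. Qed.

Lemma inQ_add_gen n a Pstar w x0 y0 s : in_Q n a Pstar w -> (x0 < y0)%nat -> (y0 < n)%nat -> 0 <= s ->
  in_Q n a Pstar (fun k => w k + s * sgn (a x0 / Pstar x0 - a y0 / Pstar y0) * gamma_vec x0 y0 k).
Proof. intros [c [Hc Hw]] Hxy Hy Hs.
 exists (fun x y => c x y + (if andb (Nat.eqb x x0) (Nat.eqb y y0) then s else 0)). split.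
 { intros; destruct (andb (Nat.eqb j x0) (Nat.eqb i y0)); pose proof (Hc j i); lra. }
 intros k Hk. rewrite Hw by auto.
 set (T := fun j i => sgn (a j / Pstar j - a i / Pstar i) * gamma_vec j i k).
 transitivity (fsum n (fun i => fsum i (fun j => c j i * T j i)) + fsum n (fun i => fsum i (fun j => (if andb (Nat.eqb j x0) (Nat.eqb i y0) then s else 0) * T j i))).
 2:{ rewrite <- fsum_plus. apply fsum_ext. intros i _. rewrite <- fsum_plus. apply fsum_ext. intros j _. unfold T. ring. }
 f_equal.
 { apply fsum_ext; intros i _; apply fsum_ext; intros j _; unfold T; ring. }
 rewrite (fsum_single n y0); auto.
 2:{ intros i _ Hi. apply fsum_zero. intros j _. apply Nat.eqb_neq in Hi. rewrite Hi, andb_false_r. ring. }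
 rewrite (fsum_single y0 x0); auto.
 2:{ intros j _ Hj. apply Nat.eqb_neq in Hj. rewrite Hj. simpl. ring. }
 rewrite !Nat.eqb_refl. simpl. unfold T. ring. Qed.

Lemma gamma_swap j i k : gamma_vec i j k = - gamma_vec j i k.
Proof. unfold gamma_vec. ring. Qed.

Lemma inQ_add n a Pstar w i j t : in_Q n a Pstar w -> (i < n)%nat -> (j < n)%nat ->
  rr a Pstar i < rr a Pstar j -> 0 <= t -> in_Q n a Pstar (fun k => w k + t * gamma_vec j i k).
Proof. unfold rr. intros Hw Hi Hj Hr Ht. destruct (Nat.lt_total j i) as [Hl|[He|Hl]].
 - eapply inQ_ext; [|apply (inQ_add_gen n a Pstar w j i t); auto].
   intros k _. rewrite sgn_pos by lra. ring.
 - subst; lra.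
 - eapply inQ_ext; [|apply (inQ_add_gen n a Pstar w i j t); auto].
   intros k _. rewrite sgn_neg by lra. rewrite gamma_swap. ring. Qed.

Definition Gt n a Pstar (v : vec) l := fsum n (fun k =>
  if Rlt_dec l (rr a Pstar k) then v k else if Req_EM_T (rr a Pstar k) l then Rmax (v k) 0 else 0).

Lemma argmax n (P : nat -> Prop) (f : nat -> R) : (exists k, (k < n)%nat /\ P k) ->
  exists i, (i < n)%nat /\ P i /\ forall k, (k < n)%nat -> P k -> f k <= f i.
Proof. induction n; intros [k [Hk Pk]]; [lia|].
 destruct (classic (exists k, (k < n)%nat /\ P k)) as [Hex|Hno].
 - destruct (IHn Hex) as [i [Hi [Pi Hmax]]].
   destruct (classic (P n)) as [Pn|Pn]; [destruct (Rle_dec (f n) (f i))|].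
   + exists i; repeat split; auto; try lia. intros k' Hk' Pk'. destruct (Nat.eq_dec k' n); [subst; auto|apply Hmax; auto; lia].
   + exists n; repeat split; auto. intros k' Hk' Pk'. destruct (Nat.eq_dec k' n); [subst; lra|]. pose proof (Hmax k' ltac:(lia) Pk'); lra.
   + exists i; repeat split; auto; try lia. intros k' Hk' Pk'. destruct (Nat.eq_dec k' n); [subst; tauto|apply Hmax; auto; lia].
 - assert (k = n) by (destruct (Nat.eq_dec k n); auto; exfalso; apply Hno; exists k; split; auto; lia). subst.
   exists n; repeat split; auto. intros k' Hk' Pk'. destruct (Nat.eq_dec k' n); [subst; lra|].
   exfalso; apply Hno; exists k'; split; auto; lia. Qed.

Lemma gamma_i j i : i <> j -> gamma_vec j i i = 1.
Proof. intros H. unfold gamma_vec. rewrite Nat.eqb_refl. apply Nat.eqb_neq in H. rewrite H. ring. Qed.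
Lemma gamma_j j i : i <> j -> gamma_vec j i j = -1.
Proof. intros H. unfold gamma_vec. rewrite Nat.eqb_refl. assert (j <> i) by auto. apply Nat.eqb_neq in H0. rewrite H0. ring. Qed.
Lemma gamma_o j i k : k <> i -> k <> j -> gamma_vec j i k = 0.
Proof. intros H1 H2. unfold gamma_vec. apply Nat.eqb_neq in H1, H2. rewrite H1, H2. ring. Qed.

Lemma cone_main n a Pstar : forall m v, (nz n v < m)%nat -> fsum n v = 0 ->
  (forall l, Gt n a Pstar v l <= 0) -> in_Q n a Pstar v.
Proof. induction m; intros v Hnz Hs HG; [lia|].
 destruct (classic (exists k, (k < n)%nat /\ 0 < v k)) as [Hex|Hno].
 2:{ apply inQ_zero. apply fsum_nonpos_zero; auto. intros k Hk. apply Rnot_lt_le. intro; apply Hno; eauto. }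
 destruct (argmax n (fun k => 0 < v k) (rr a Pstar) Hex) as [i [Hi [Pi Hmax]]].
 set (r := rr a Pstar) in *.
 assert (Hab : forall k, (k < n)%nat -> r i < r k -> v k <= 0).
 { intros k Hk Hr. apply Rnot_lt_le. intro H. pose proof (Hmax k Hk H). lra. }
 assert (Hj : exists j, (j < n)%nat /\ r i < r j /\ v j < 0).
 { pose proof (HG (r i)) as G. unfold Gt in G. fold r in G.
   rewrite (fsum_ext n _ (fun k => (if Rlt_dec (r i) (r k) then v k else 0) + (if Rlt_dec (r i) (r k) then 0 else if Req_EM_T (r k) (r i) then Rmax (v k) 0 else 0))) in G
     by (intros k _; destruct (Rlt_dec (r i) (r k)); lra).
   rewrite fsum_plus in G.
   assert (Hg : v i <= fsum n (fun k => if Rlt_dec (r i) (r k) then 0 else if Req_EM_T (r k) (r i) then Rmax (v k) 0 else 0)).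
   { eapply Rle_trans; [|apply (fsum_ge_term _ _ i)]; auto.
     - cbv beta. destruct (Rlt_dec (r i) (r i)); [lra|]. destruct (Req_EM_T (r i) (r i)); [|lra]. apply Rmax_l.
     - intros k _. cbv beta. destruct (Rlt_dec (r i) (r k)); [lra|]. destruct (Req_EM_T (r k) (r i)); [apply Rmax_r|lra]. }
   destruct (fsum_neg_ex n (fun k => if Rlt_dec (r i) (r k) then v k else 0)) as [j [Hjn Hjv]]; [lra|].
   exists j. destruct (Rlt_dec (r i) (r j)); [|lra]. auto. }
 destruct Hj as [j [Hjn [Hrij Hvj]]].
 assert (Hij : i <> j) by (intro; subst; lra).
 set (t := Rmin (v i) (- v j)).
 assert (Ht1 : t <= v i) by apply Rmin_l. assert (Ht2 : t <= - v j) by apply Rmin_r.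
 assert (Ht0 : 0 < t) by (unfold t; apply Rmin_glb_lt; lra).
 set (v' := fun k => v k - t * gamma_vec j i k).
 assert (Ev'i : v' i = v i - t) by (unfold v'; rewrite gamma_i; auto; ring).
 assert (Ev'j : v' j = v j + t) by (unfold v'; rewrite gamma_j; auto; ring).
 assert (Ev'o : forall k, k <> i -> k <> j -> v' k = v k) by (intros; unfold v'; rewrite gamma_o; auto; ring).
 apply (inQ_ext n a Pstar v (fun k => v' k + t * gamma_vec j i k)).
 { intros; unfold v'; ring. }
 apply inQ_add; auto; [|lra]. apply IHm.
 - assert (nz n v' < nz n v)%nat; [|lia]. apply nz_lt.
   + intros k Hk Hv. destruct (Nat.eq_dec k i); [subst; lra|]. destruct (Nat.eq_dec k j); [subst; lra|].
     rewrite Ev'o; auto.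
   + unfold t in *. unfold Rmin in *. destruct (Rle_dec (v i) (- v j)).
     * exists i; repeat split; auto; lra.
     * exists j; repeat split; auto; lra.
 - unfold v'. rewrite fsum_minus, fsum_scal, Hs. unfold gamma_vec. rewrite fsum_minus, !fsum_ind; auto. ring.
 - intros l. destruct (Rlt_dec (r i) l).
   + unfold Gt. fold r. apply (Rle_trans _ (fsum n (fun _ => 0))); [|rewrite fsum_zero; auto; lra]. apply fsum_le. intros k Hk. cbv beta.
     assert (Hk' : r i < r k -> v' k <= 0).
     { intros. destruct (Nat.eq_dec k i); [subst; lra|]. destruct (Nat.eq_dec k j); [subst; lra|].
       rewrite Ev'o; auto. }
     destruct (Rlt_dec l (r k)); [apply Hk'; lra|]. destruct (Req_EM_T (r k) l); [|lra].
     unfold Rmax; destruct (Rle_dec (v' k) 0); [lra|]. pose proof (Hk' ltac:(lra)); lra.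
   + assert (Gt n a Pstar v' l = Gt n a Pstar v l); [|rewrite H; auto].
     unfold Gt; fold r.
     rewrite (fsum_ext n _ (fun k => ((if Rlt_dec l (r k) then v k else if Req_EM_T (r k) l then Rmax (v k) 0 else 0)
          + t * (if Nat.eqb k j then 1 else 0)) - t * (if Nat.eqb k i then 1 else 0))).
     * rewrite fsum_minus, fsum_plus, !fsum_scal, !fsum_ind; auto. ring.
     * intros k Hk. destruct (Nat.eq_dec k i) as [Eki|Nki].
       { subst k. rewrite Nat.eqb_refl. assert (Nat.eqb i j = false) by (apply Nat.eqb_neq; auto). rewrite H, Ev'i.
         destruct (Rlt_dec l (r i)); [ring|]. destruct (Req_EM_T (r i) l); [|lra].
         unfold Rmax. destruct (Rle_dec (v i - t) 0); destruct (Rle_dec (v i) 0); lra. }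
       destruct (Nat.eq_dec k j) as [Ekj|Nkj].
       { subst k. rewrite Nat.eqb_refl. assert (Nat.eqb j i = false) by (apply Nat.eqb_neq; auto). rewrite H, Ev'j.
         destruct (Rlt_dec l (r j)); [ring|lra]. }
       rewrite Ev'o by auto. apply Nat.eqb_neq in Nki, Nkj. rewrite Nki, Nkj. ring.
Qed.

Definition Fth n (Pstar : vec) th (x : vec) := fsum n (fun i => Rmax (x i - th * Pstar i) 0).

Lemma Rmax_pos' y : 0 <= y -> Rmax y 0 = y.
Proof. intros; unfold Rmax; destruct (Rle_dec y 0); lra. Qed.
Lemma Rmax_neg' y : y <= 0 -> Rmax y 0 = 0.
Proof. intros; unfold Rmax; destruct (Rle_dec y 0); lra. Qed.

Lemma maj_G n a b Pstar : (forall k, (k < n)%nat -> 0 < Pstar k) ->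
  (forall th, Fth n Pstar th b <= Fth n Pstar th a) ->
  forall l, Gt n a Pstar (fun k => b k - a k) l <= 0.
Proof. intros Hp Hmaj l.
 set (chi := fun k => if Rlt_dec l (rr a Pstar k) then 1 else if Req_EM_T (rr a Pstar k) l then (if Rlt_dec 0 (b k - a k) then 1 else 0) else 0).
 assert (E : Gt n a Pstar (fun k => b k - a k) l = fsum n (fun k => chi k * (b k - l * Pstar k)) - Fth n Pstar l a).
 { unfold Fth, Gt. rewrite <- fsum_minus. apply fsum_ext. intros k Hk. cbv beta. unfold chi.
   assert (Hpk := Hp k Hk). assert (Ha : a k = rr a Pstar k * Pstar k) by (unfold rr; field; lra).
   set (R0 := rr a Pstar k) in *.
   destruct (Rlt_dec l R0).
   - rewrite (Rmax_pos' (a k - l * Pstar k)); [|nra]. ring.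
   - destruct (Req_EM_T R0 l).
     + rewrite <- e. rewrite (Rmax_neg' (a k - R0 * Pstar k)) by (rewrite Ha; lra). destruct (Rlt_dec 0 (b k - a k)).
       * rewrite Rmax_pos' by lra. rewrite Ha. ring.
       * rewrite Rmax_neg' by lra. ring.
     + rewrite (Rmax_neg' (a k - l * Pstar k)) by nra. ring. }
 rewrite E. pose proof (Hmaj l).
 assert (fsum n (fun k => chi k * (b k - l * Pstar k)) <= Fth n Pstar l b).
 { apply fsum_le. intros k _. unfold chi.
   destruct (Rlt_dec l (rr a Pstar k)); [|destruct (Req_EM_T (rr a Pstar k) l); [destruct (Rlt_dec 0 (b k - a k))|]];
   try (rewrite Rmult_1_l; apply Rmax_l); rewrite Rmult_0_l; apply Rmax_r. }
 lra. Qed.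

Lemma Rmax_lip x y : Rabs (Rmax x 0 - Rmax y 0) <= Rabs (x - y).
Proof. unfold Rmax. destruct (Rle_dec x 0); destruct (Rle_dec y 0);
 unfold Rabs; repeat destruct Rcase_abs; lra. Qed.

Lemma cv_rmax u l c : Un_cv u l -> Un_cv (fun k => Rmax (u k - c) 0) (Rmax (l - c) 0).
Proof. intros H e He. destruct (H e He) as [N HN]. exists N. intros k Hk.
 unfold Rdist in *. eapply Rle_lt_trans; [apply Rmax_lip|]. replace (u k - c - (l - c)) with (u k - l) by ring. auto. Qed.

Lemma cv_fsum n (A : nat -> vec) (a : vec) : (forall i, (i < n)%nat -> Un_cv (fun k => A k i) (a i)) ->
  Un_cv (fun k => fsum n (A k)) (fsum n a).
Proof. induction n; intros H; simpl.
 - intros e He. exists O. intros. unfold Rdist. rewrite Rminus_diag, Rabs_R0. lra.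
 - apply CV_plus. apply IHn; intros; apply H; lia. apply H; lia. Qed.

Lemma Fth_cv n Pstar th (A : nat -> vec) a : (forall i, (i < n)%nat -> Un_cv (fun k => A k i) (a i)) ->
  Un_cv (fun k => Fth n Pstar th (A k)) (Fth n Pstar th a).
Proof. intros H. unfold Fth. apply (cv_fsum n (fun k i => Rmax (A k i - th * Pstar i) 0)).
 intros i Hi. apply cv_rmax. auto. Qed.

Definition MRel n Pstar (a b : vec) := forall th, Fth n Pstar th b <= Fth n Pstar th a.

Lemma MRel_trans n Pstar : transitive_on (MRel n Pstar).
Proof. intros a b c H1 H2 th. specialize (H1 th); specialize (H2 th); lra. Qed.

Lemma MRel_closed n Pstar : closed_rel n (MRel n Pstar).
Proof. intros A B a b HR HA HB _ _ th. eapply Rle_cv_lim; [intro k; apply (HR k th)| |]; apply Fth_cv; auto. Qed.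

Lemma kol_chi n Pstar q p chi th : markov_rates n Pstar q -> (forall i, chi i = 0 \/ chi i = 1) ->
  (forall j, (j < n)%nat -> chi j = 1 -> 0 <= p j - th * Pstar j) ->
  (forall j, (j < n)%nat -> chi j = 0 -> p j - th * Pstar j <= 0) ->
  fsum n (fun i => chi i * kolmogorov_rhs n q p i) <= 0.
Proof. intros [Hq Hb] H01 H1 H0.
 set (y := fun j => p j - th * Pstar j).
 assert (E1 : forall i, (i < n)%nat -> kolmogorov_rhs n q p i = fsum n (fun j => if Nat.eqb j i then 0 else q i j * y j - q j i * y i)).
 { intros i Hi. unfold kolmogorov_rhs.
   transitivity (fsum n (fun j => if Nat.eqb j i then 0 else q i j * y j - q j i * y i) + th * (fsum n (fun j => if Nat.eqb j i then 0 else q i j * Pstar j) - fsum n (fun j => if Nat.eqb j i then 0 else q j i) * Pstar i)).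
   - rewrite <- fsum_scalr, <- fsum_minus, <- fsum_scal, <- fsum_plus. apply fsum_ext. intros j _.
     destruct (Nat.eqb j i); unfold y; ring.
   - rewrite Hb by auto. ring. }
 rewrite (fsum_ext n _ (fun i => fsum n (fun j => if Nat.eqb j i then 0 else chi i * q i j * y j) - fsum n (fun j => if Nat.eqb j i then 0 else chi i * q j i * y i))).
 2:{ intros i Hi. rewrite E1 by auto. rewrite <- fsum_minus, <- fsum_scal. apply fsum_ext. intros j _. destruct (Nat.eqb j i); ring. }
 rewrite fsum_minus.
 rewrite (fsum_swap n (fun i j => if Nat.eqb j i then 0 else chi i * q j i * y i)).
 rewrite <- fsum_minus.
 apply (Rle_trans _ (fsum n (fun _ => 0))); [|rewrite fsum_zero; auto; lra].
 apply fsum_le. intros i Hi. rewrite <- fsum_minus.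
 apply (Rle_trans _ (fsum n (fun _ => 0))); [|rewrite fsum_zero; auto; lra].
 apply fsum_le. intros j Hj. cbv beta. rewrite (Nat.eqb_sym i j).
 destruct (Nat.eqb j i) eqn:Eji; [lra|]. apply Nat.eqb_neq in Eji.
 assert (Hqij : 0 <= q i j) by (apply Hq; auto).
 destruct (H01 j) as [Hc|Hc].
 - pose proof (H0 j Hj Hc). unfold y. rewrite Hc. destruct (H01 i) as [Hd|Hd]; rewrite Hd; nra.
 - pose proof (H1 j Hj Hc). unfold y. rewrite Hc. destruct (H01 i) as [Hd|Hd]; rewrite Hd; nra.
Qed.

Definition chi_of y d := if Rlt_dec 0 y then 1 else if Rlt_dec y 0 then 0 else if Rlt_dec 0 d then 1 else 0.

Lemma chi_of_01 y d : chi_of y d = 0 \/ chi_of y d = 1.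
Proof. unfold chi_of. destruct (Rlt_dec 0 y); auto. destruct (Rlt_dec y 0); auto. destruct (Rlt_dec 0 d); auto. Qed.
Lemma chi_of_1 y d : chi_of y d = 1 -> 0 <= y.
Proof. unfold chi_of. destruct (Rlt_dec 0 y); [lra|]. destruct (Rlt_dec y 0); [lra|]. intros; lra. Qed.
Lemma chi_of_0 y d : chi_of y d = 0 -> y <= 0.
Proof. unfold chi_of. destruct (Rlt_dec 0 y); [lra|]. intros; lra. Qed.

Lemma local_one (f : R -> R) t d c : derivable_pt_lim f t d -> forall e, 0 < e ->
  exists del, 0 < del /\ forall h, 0 < h < del ->
    Rmax (f (t + h) - c) 0 <= Rmax (f t - c) 0 + chi_of (f t - c) d * d * h + e * h.
Proof. intros Hd e He. destruct (Hd e He) as [[d0 Hd0] Hdel]. simpl in Hdel.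
 assert (Key : forall h, 0 < h < d0 -> f (t + h) - c <= (f t - c) + (d + e) * h).
 { intros h Hh. assert (h <> 0) by lra. assert (Rabs h < d0) by (rewrite Rabs_right; lra).
   pose proof (Hdel h H H0). set (D := (f (t + h) - f t) / h) in *.
   assert (f (t + h) = f t + D * h) by (unfold D; field; auto).
   apply Rabs_def2 in H1. assert (D * h <= (d + e) * h) by (apply Rmult_le_compat_r; lra). lra. }
 set (y := f t - c) in *. set (a := Rabs d). assert (Ha1 : d <= a) by apply Rle_abs.
 assert (Ha2 : - a <= d) by (unfold a; rewrite <- Rabs_Ropp; pose proof (Rle_abs (-d)); lra).
 assert (Ha0 : 0 <= a) by apply Rabs_pos.
 unfold chi_of. destruct (Rlt_dec 0 y).
 - exists (Rmin d0 (y / (a + 1))). split. { apply Rmin_glb_lt; auto. apply Rdiv_lt_0_compat; lra. }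
   intros h [Hh1 Hh2]. assert (h < d0) by (eapply Rlt_le_trans; [apply Hh2|apply Rmin_l]).
   assert (h < y / (a+1)) by (eapply Rlt_le_trans; [apply Hh2|apply Rmin_r]).
   assert (h * (a + 1) < y) by (apply (Rmult_lt_compat_r (a+1)) in H0; [|lra]; field_simplify in H0; lra).
   pose proof (Key h ltac:(lra)). rewrite (Rmax_pos' y) by lra. apply Rmax_lub; nra.
 - destruct (Rlt_dec y 0).
   + exists (Rmin d0 (- y / (a + e + 1))). split. { apply Rmin_glb_lt; auto. apply Rdiv_lt_0_compat; lra. }
     intros h [Hh1 Hh2]. assert (h < d0) by (eapply Rlt_le_trans; [apply Hh2|apply Rmin_l]).
     assert (h < - y / (a + e + 1)) by (eapply Rlt_le_trans; [apply Hh2|apply Rmin_r]).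
     assert (h * (a + e + 1) < - y) by (apply (Rmult_lt_compat_r (a+e+1)) in H0; [|lra]; field_simplify in H0; lra).
     pose proof (Key h ltac:(lra)). rewrite (Rmax_neg' y) by lra. rewrite Rmax_neg' by nra. nra.
   + assert (y = 0) by lra. exists d0. split; [exact Hd0|]. intros h Hh. pose proof (Key h Hh).
     rewrite (Rmax_neg' y) by lra. rewrite H in Key. destruct (Rlt_dec 0 d); apply Rmax_lub; nra.
Qed.

Lemma fin_delta n (Pr : nat -> R -> Prop) : (forall i a b, Pr i a -> 0 < b <= a -> Pr i b) ->
  (forall i, (i < n)%nat -> exists del, 0 < del /\ Pr i del) ->
  exists del, 0 < del /\ forall i, (i < n)%nat -> Pr i del.
Proof. intros Hm. induction n; intros H.
 - exists 1; split; [lra|]; intros; lia.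
 - destruct IHn as [d1 [Hd1 H1]]. { intros; apply H; lia. }
   destruct (H n ltac:(lia)) as [d2 [Hd2 H2]].
   exists (Rmin d1 d2). assert (0 < Rmin d1 d2) by (apply Rmin_glb_lt; auto). split; auto.
   intros i Hi. destruct (Nat.eq_dec i n).
   + subst. eapply Hm; [apply H2|split; auto; apply Rmin_r].
   + eapply Hm; [apply H1; lia|split; auto; apply Rmin_l]. Qed.

Lemma fsum_const n c : fsum n (fun _ => c) = INR n * c.
Proof. induction n; simpl fsum; [simpl; ring|]. rewrite IHn, S_INR. ring. Qed.

Lemma phi_local n Pstar q P th : markov_rates n Pstar q -> kolmogorov_solution n q P ->
  forall t e, 0 < e -> exists del, 0 < del /\ forall h, 0 < h < del ->
    Fth n Pstar th (P (t + h)) <= Fth n Pstar th (P t) + e * h.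
Proof. intros Hr Hs t e He.
 set (d := fun i => kolmogorov_rhs n q (P t) i).
 set (chi := fun i => chi_of (P t i - th * Pstar i) (d i)).
 assert (Hn0 : 0 <= INR n) by apply pos_INR.
 set (e' := e / (INR n + 1)). assert (He' : 0 < e') by (apply Rdiv_lt_0_compat; lra).
 destruct (fin_delta n (fun i del => forall h, 0 < h < del -> Rmax (P (t + h) i - th * Pstar i) 0 <= Rmax (P t i - th * Pstar i) 0 + chi i * d i * h + e' * h)) as [del [Hdel Hall]].
 { intros i a b Ha Hb h Hh. apply Ha. lra. }
 { intros i Hi. apply (local_one (fun s => P s i) t (d i) (th * Pstar i)); [apply Hs; auto|auto]. }
 exists del; split; auto. intros h Hh.
 unfold Fth. eapply Rle_trans; [apply fsum_le; intros i Hi; apply (Hall i Hi h Hh)|].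
 rewrite (fsum_ext n _ (fun i => (Rmax (P t i - th * Pstar i) 0 + h * (chi i * kolmogorov_rhs n q (P t) i)) + e' * h)) by (intros; unfold d; ring).
 rewrite !fsum_plus, fsum_scal, fsum_const.
 assert (fsum n (fun i => chi i * kolmogorov_rhs n q (P t) i) <= 0).
 { apply (kol_chi n Pstar q (P t) chi th); auto.
   - intros; apply chi_of_01.
   - intros j _ Hj. eapply chi_of_1; apply Hj.
   - intros j _ Hj. eapply chi_of_0; apply Hj. }
 assert (INR n * e' <= e) by (unfold e'; apply (Rmult_le_reg_r (INR n + 1)); [lra|]; field_simplify; nra).
 nra. Qed.

Lemma cont_rmax f c t : continuity_pt f t -> continuity_pt (fun s => Rmax (f s - c) 0) t.
Proof. intros H e He. destruct (H e He) as [alp [Ha Hx]]. exists alp; split; auto.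
 intros x Hxx. pose proof (Hx x Hxx). simpl in *. unfold Rdist in *.
 eapply Rle_lt_trans; [apply Rmax_lip|]. replace (f x - c - (f t - c)) with (f x - f t) by ring. auto. Qed.

Lemma cont_fsum n (g : R -> vec) t : (forall i, (i < n)%nat -> continuity_pt (fun s => g s i) t) ->
  continuity_pt (fun s => fsum n (g s)) t.
Proof. induction n; intros H; simpl.
 - apply continuity_pt_const. intros x y; auto.
 - apply (continuity_pt_plus (fun s => fsum n (g s)) (fun s => g s n)); [apply IHn; intros; apply H; lia|apply H; lia]. Qed.

Lemma phi_cont n Pstar q P th : kolmogorov_solution n q P -> forall t, continuity_pt (fun s => Fth n Pstar th (P s)) t.
Proof. intros Hs t. unfold Fth. apply (cont_fsum n (fun s i => Rmax (P s i - th * Pstar i) 0)).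
 intros i Hi. apply (cont_rmax (fun s => P s i)). apply derivable_continuous_pt.
 exists (kolmogorov_rhs n q (P t) i). apply Hs; auto. Qed.

Lemma right_decr (phi : R -> R) : (forall t, continuity_pt phi t) ->
  (forall t e, 0 < e -> exists del, 0 < del /\ forall h, 0 < h < del -> phi (t + h) <= phi t + e * h) ->
  phi 1 <= phi 0.
Proof. intros Hc Hl.
 assert (Main : forall e, 0 < e -> phi 1 <= phi 0 + e).
 { intros e He. set (E := fun x => 0 <= x <= 1 /\ phi x <= phi 0 + e * x).
   assert (Hb : bound E) by (exists 1; intros x [Hx _]; lra).
   assert (Hex : exists x, E x) by (exists 0; split; [lra|]; lra).
   destruct (completeness E Hb Hex) as [T [HTub HTl]].
   assert (HT0 : 0 <= T) by (apply HTub; split; [lra|]; lra).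
   assert (HT1 : T <= 1) by (apply HTl; intros x [Hx _]; lra).
   assert (HTE : phi T <= phi 0 + e * T).
   { apply Rnot_lt_le. intro Hg. set (g := phi T - phi 0 - e * T).
     destruct (Hc T (g / 2) ltac:(unfold g; lra)) as [alp [Ha Hx]].
     destruct (classic (exists x, E x /\ T - alp / 2 < x)) as [[x [Ex Hxx]]|Hno].
     - assert (x <= T) by (apply HTub; auto).
       destruct (Req_dec x T) as [Heq|Hne].
       + subst x. destruct Ex; lra.
       + assert (Hd : Rabs (x - T) < alp) by (apply Rabs_def1; lra).
         assert (Hxd : D_x no_cond T x /\ R_dist x T < alp) by (split; [split; [constructor|auto] | exact Hd]).
         pose proof (Hx x Hxd) as Hc2. simpl in Hc2. unfold Rdist in Hc2. apply Rabs_def2 in Hc2.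
         destruct Ex as [_ Ex]. assert (e * x <= e * T) by (apply Rmult_le_compat_l; lra). unfold g in Hc2. lra.
     - assert (T <= T - alp / 2); [|lra]. apply HTl. intros x Ex. apply Rnot_lt_le. intro; apply Hno; eauto. }
   destruct (Rlt_dec T 1) as [HT|HT].
   - destruct (Hl T e He) as [del [Hdel Hh]].
     set (h := Rmin (del / 2) (1 - T)).
     assert (Hh0 : 0 < h) by (apply Rmin_glb_lt; lra).
     assert (Hh1 : h <= del / 2) by apply Rmin_l. assert (Hh2 : h <= 1 - T) by apply Rmin_r.
     pose proof (Hh h ltac:(lra)).
     assert (T + h <= T); [|lra]. apply HTub. split; [lra|]. lra.
   - assert (T = 1) by lra. subst T. lra. }
 apply Rnot_lt_le. intro H. pose proof (Main ((phi 1 - phi 0) / 2) ltac:(lra)). lra. Qed.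

Lemma step_maj n Pstar P0 P1 : markov_step n Pstar P0 P1 -> MRel n Pstar P0 P1.
Proof. intros [_ [q [P [Hr [Hs [E0 E1]]]]]] th.
 assert (F1 : Fth n Pstar th P1 = Fth n Pstar th (P 1)) by (unfold Fth; apply fsum_ext; intros; rewrite E1; auto).
 assert (F0 : Fth n Pstar th P0 = Fth n Pstar th (P 0)) by (unfold Fth; apply fsum_ext; intros; rewrite E0; auto).
 rewrite F0, F1. apply (right_decr (fun s => Fth n Pstar th (P s))).
 - apply (phi_cont n Pstar q P th Hs).
 - apply (phi_local n Pstar q P th Hr Hs). Qed.

Theorem corollary3 (n : nat) (Pstar P0 P1 : vec) :
  (2 <= n)%nat ->
  pos_simplex n Pstar ->
  pos_simplex n P0 -> pos_simplex n P1 ->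
  markov_order n Pstar P0 P1 ->
  in_Q n P0 Pstar (fun k => P1 k - P0 k).
Proof.
  intros _ [Hps _] [_ S0] [_ S1] Hmo.
  assert (HR : MRel n Pstar P0 P1).
  { apply Hmo; [apply step_maj|apply MRel_trans|apply MRel_closed]. }
  apply (cone_main n P0 Pstar (S (nz n (fun k => P1 k - P0 k)))); [lia| |].
  - rewrite fsum_minus, S0, S1. ring.
  - apply maj_G; auto.
Qed.
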